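(* The image of $\bar\Gamma(2)_2=[\bar\Gamma(2),\bar\Gamma(2)]$ in $\mathrm{PSL}_2(\mathbb{Z}/3\mathbb{Z})$ is equal to $D_3$. For every prime $p>3$, its image in $\mathrm{PSL}_2(\mathbb{Z}/p\mathbb{Z})$ is $\mathrm{PSL}_2(\mathbb{Z}/p\mathbb{Z})$.
   Context: $\bar\Gamma(2)=\Gamma(2)/\{\pm1\}\subset\mathrm{PSL}_2(\mathbb{Z})$, where $\Gamma(2)$ is the principal congruence subgroup of level $2$; images are taken under the reduction maps $\mathrm{PSL}_2(\mathbb{Z})\to\mathrm{PSL}_2(\mathbb{Z}/n\mathbb{Z})$. $D_3\subset\mathrm{PSL}_2(\mathbb{Z}/3\mathbb{Z})$ is the index-$3$ subgroup (the $2$-Sylow subgroup, isomorphic to the Klein four-group) consisting of the classes of $\pm I$, $\pm\begin{pmatrix}0&-1\\1&0\end{pmatrix}$, $\pm\begin{pmatrix}-1&1\\1&1\end{pmatrix}$, $\pm\begin{pmatrix}1&1\\1&-1\end{pmatrix}$. *)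

(* Defs.v *)
From HB Require Import structures.
From mathcomp Require Import all_boot all_order all_algebra.
Set Implicit Arguments. Unset Strict Implicit. Unset Printing Implicit Defensive.
Import Order.TTheory GRing.Theory Num.Theory.
Local Open Scope ring_scope.

Definition Gamma2 (A : 'M[int]_2) : Prop :=
  \det A = 1 /\ forall i j : 'I_2, (2 %| A i j - (i == j)%:Z)%Z.

Definition commx (A B : 'M[int]_2) : 'M[int]_2 :=
  invmx A *m invmx B *m A *m B.

(* The commutator subgroup [Gamma(2), Gamma(2)] of SL_2(Z): finite products
   of commutators of elements of Gamma(2) (inverse of a commutator is a
   commutator, so this is the generated subgroup). *)
Inductive comm_Gamma2 : 'M[int]_2 -> Prop :=
| comm_Gamma2_1 : comm_Gamma2 1%:M
| comm_Gamma2_mul : forall A B C, Gamma2 A -> Gamma2 B -> comm_Gamma2 C ->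
    comm_Gamma2 (commx A B *m C).

(* Gbar2_2 = [Gbar(2), Gbar(2)] subset PSL_2(Z), described by the set of its
   representatives: M represents an element of it iff M or -M lies in
   [Gamma(2),Gamma(2)] (commutators in PSL_2 lift to commutators in SL_2,
   signs cancel). *)
Definition Gbar2_2 (M : 'M[int]_2) : Prop := comm_Gamma2 M \/ comm_Gamma2 (- M).

Definition redmx (p : nat) (M : 'M[int]_2) : 'M['F_p]_2 :=
  map_mx (fun z : int => z%:~R) M.

(* Image of Gbar2_2 in PSL_2(Z/pZ), as the (+-1-stable) set of representing
   matrices in SL_2(F_p). *)
Definition image_Gbar2_2 (p : nat) (N : 'M['F_p]_2) : Prop :=
  exists M, Gbar2_2 M /\ redmx p M = N.

Definition mx2 {R : Type} (a b c d : R) : 'M[R]_2 :=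
  \matrix_(i < 2, j < 2)
    if (i : nat) == 0%N then (if (j : nat) == 0%N then a else b)
    else (if (j : nat) == 0%N then c else d).

(* D_3 subset PSL_2(Z/3Z), as the set of its representatives in SL_2(F_3). *)
Definition D3 : seq 'M['F_3]_2 :=
  [:: mx2 1 0 0 1; mx2 (-1) 0 0 (-1);
      mx2 0 (-1) 1 0; mx2 0 1 (-1) 0;
      mx2 (-1) 1 1 1; mx2 1 (-1) (-1) (-1);
      mx2 1 1 1 (-1); mx2 (-1) (-1) (-1) 1].

(* Main.v *)
Require Import Defs.
From HB Require Import structures.
From mathcomp Require Import all_boot all_order all_algebra.
From mathcomp Require Import ring.
Set Implicit Arguments. Unset Strict Implicit. Unset Printing Implicit Defensive.
Import Order.TTheory GRing.Theory Num.Theory.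
Local Open Scope ring_scope.

Section MX2.
Variable R : comRingType.
Implicit Types a b c d e f g h : R.

Lemma mx2_eta (M : 'M[R]_2) : M = mx2 (M 0 0) (M 0 1) (M 1 0) (M 1 1).
Proof.
by apply/matrixP => -[[|[|i]] Hi] [[|[|j]] Hj]; rewrite !mxE //=;
  congr (M _ _); apply/val_inj.
Qed.

Lemma mx2E00 a b c d : mx2 a b c d 0 0 = a. Proof. by rewrite mxE. Qed.
Lemma mx2E01 a b c d : mx2 a b c d 0 1 = b. Proof. by rewrite mxE. Qed.
Lemma mx2E10 a b c d : mx2 a b c d 1 0 = c. Proof. by rewrite mxE. Qed.
Lemma mx2E11 a b c d : mx2 a b c d 1 1 = d. Proof. by rewrite mxE. Qed.
Definition mx2E := (mx2E00, mx2E01, mx2E10, mx2E11).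

Lemma mul_mx2 a b c d e f g h :
  mx2 a b c d *m mx2 e f g h = mx2 (a*e+b*g) (a*f+b*h) (c*e+d*g) (c*f+d*h).
Proof.
apply/matrixP => -[[|[|i]] Hi] [[|[|j]] Hj] //;
  rewrite !mxE big_ord_recl big_ord1 /= !mxE //.
Qed.

Lemma det_mx2 a b c d : \det (mx2 a b c d) = a * d - b * c.
Proof.
rewrite (expand_det_row _ 0) big_ord_recl big_ord1 /cofactor.
rewrite !mxE /= !det_mx11 !mxE /=.
by rewrite /bump /= expr0 expr1 mul1r mulN1r mulrN.
Qed.

Lemma adj_mx2 a b c d : \adj (mx2 a b c d) = mx2 d (-b) (-c) a.
Proof.
apply/matrixP => -[[|[|i]] Hi] [[|[|j]] Hj] //;
  rewrite !mxE /cofactor det_mx11 !mxE /= /bump /=.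
all: by rewrite -signr_odd /= ?expr0 ?expr1 ?mul1r ?mulN1r.
Qed.

Lemma opp_mx2 a b c d : - mx2 a b c d = mx2 (-a) (-b) (-c) (-d).
Proof. by apply/matrixP => -[[|[|i]] Hi] [[|[|j]] Hj]; rewrite !mxE. Qed.

Lemma one_mx2 : (1%:M : 'M[R]_2) = mx2 1 0 0 1.
Proof. by apply/matrixP => -[[|[|i]] Hi] [[|[|j]] Hj]; rewrite !mxE. Qed.

Lemma map_mx2 (S : Type) (F : R -> S) a b c d :
  map_mx F (mx2 a b c d) = mx2 (F a) (F b) (F c) (F d).
Proof. by apply/matrixP => -[[|[|i]] Hi] [[|[|j]] Hj]; rewrite !mxE. Qed.

Lemma mx2_inj a b c d a' b' c' d' : mx2 a b c d = mx2 a' b' c' d' ->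
  [/\ a = a', b = b', c = c' & d = d'].
Proof.
move=> E; split.
- by have := congr1 (fun M : 'M_2 => M 0 0) E; rewrite !mx2E.
- by have := congr1 (fun M : 'M_2 => M 0 1) E; rewrite !mx2E.
- by have := congr1 (fun M : 'M_2 => M 1 0) E; rewrite !mx2E.
- by have := congr1 (fun M : 'M_2 => M 1 1) E; rewrite !mx2E.
Qed.

Lemma eq_mx2 a b c d a' b' c' d' : (mx2 a b c d == mx2 a' b' c' d') =
  [&& a == a', b == b', c == c' & d == d'].
Proof.
apply/eqP/and4P => [/mx2_inj [-> -> -> ->]|[/eqP-> /eqP-> /eqP-> /eqP->]] //.
Qed.
End MX2.

Lemma redM p (M N : 'M[int]_2) : redmx p (M *m N) = redmx p M *m redmx p N.
Proof. exact: map_mxM. Qed.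
Lemma redA p (M : 'M[int]_2) : redmx p (\adj M) = \adj (redmx p M).
Proof. exact: map_mx_adj. Qed.
Lemma redN p (M : 'M[int]_2) : redmx p (- M) = - redmx p M.
Proof. exact: map_mxN. Qed.
Lemma red1 p : redmx p 1%:M = 1%:M.
Proof. exact: map_mx1. Qed.
Lemma redD p (M : 'M[int]_2) : \det (redmx p M) = (\det M)%:~R.
Proof. exact: det_map_mx. Qed.

Lemma det_adj2 (R : comNzRingType) (A : 'M[R]_2) : \det (\adj A) = \det A.
Proof. by rewrite [A]mx2_eta adj_mx2 !det_mx2; ring. Qed.

Lemma invmx1 (A : 'M[int]_2) : \det A = 1 -> invmx A = \adj A.
Proof. by move=> H; rewrite /invmx unitmxE H unitr1 invr1 scale1r. Qed.

Lemma commxE A B : \det A = 1 -> \det B = 1 ->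
  commx A B = \adj A *m \adj B *m A *m B.
Proof. by move=> hA hB; rewrite /commx !invmx1. Qed.

Lemma det_commx A B : \det A = 1 -> \det B = 1 -> \det (commx A B) = 1.
Proof.
by move=> hA hB; rewrite commxE // !det_mulmx !det_adj2 hA hB !mulr1.
Qed.

Lemma comm_det C : comm_Gamma2 C -> \det C = 1.
Proof.
elim=> [|A B C' hA hB _ IH]; first by rewrite det1.
by rewrite det_mulmx det_commx ?IH ?mulr1 //; [case: hA|case: hB].
Qed.

Lemma comm_mul C1 C2 : comm_Gamma2 C1 -> comm_Gamma2 C2 ->
  comm_Gamma2 (C1 *m C2).
Proof.
elim=> [|A B C hA hB _ IH] h2; first by rewrite mul1mx.
by rewrite -mulmxA; constructor => //; apply: IH.
Qed.

Lemma S1 p : image_Gbar2_2 (1%:M : 'M['F_p]_2).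
Proof. by exists 1%:M; split; [left; constructor | exact: red1]. Qed.

Lemma SN p (N : 'M['F_p]_2) : image_Gbar2_2 N -> image_Gbar2_2 (- N).
Proof.
case=> M [[h|h] <-]; exists (- M); rewrite redN; split => //.
  by right; rewrite opprK.
by left.
Qed.

Lemma SM p (N1 N2 : 'M['F_p]_2) : image_Gbar2_2 N1 -> image_Gbar2_2 N2 ->
  image_Gbar2_2 (N1 *m N2).
Proof.
case=> M1 [h1 <-] [M2 [h2 <-]]; exists (M1 *m M2); rewrite redM; split => //.
case: h1 => h1; case: h2 => h2.
- by left; apply: comm_mul.
- by right; rewrite -mulmxN; apply: comm_mul.
- by right; rewrite -mulNmx; apply: comm_mul.
- by left; rewrite -[M1]opprK -[M2]opprK mulNmx mulmxN opprK; apply: comm_mul.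
Qed.

Lemma S_eq p (N N' : 'M['F_p]_2) : image_Gbar2_2 N -> N = N' -> image_Gbar2_2 N'.
Proof. by move=> h <-. Qed.

Lemma Scomm p X Y : Gamma2 X -> Gamma2 Y ->
  image_Gbar2_2 (\adj (redmx p X) *m \adj (redmx p Y) *m redmx p X *m redmx p Y).
Proof.
move=> hX hY; exists (commx X Y *m 1%:M); split.
  by left; constructor => //; constructor.
by rewrite mulmx1 commxE ?(proj1 hX) ?(proj1 hY) // !redM !redA.
Qed.

Lemma Gamma2_mx2 (a b c d : int) : a * d - b * c = 1 -> (2 %| a - 1)%Z ->
  (2 %| b)%Z -> (2 %| c)%Z -> (2 %| d - 1)%Z -> Gamma2 (mx2 a b c d).
Proof.
move=> H ha hb hc hd; split; first by rewrite det_mx2.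
move=> -[[|[|i]] Hi] -[[|[|j]] Hj] //; rewrite mxE /= ?subr0 //.
Qed.

Definition quad (R : Type) := (R * R * R * R)%type.
Definition mul4 (R : comNzRingType) (q r : quad R) : quad R :=
  let: (a,b,c,d) := q in let: (e,f,g,h) := r in
  (a*e+b*g, a*f+b*h, c*e+d*g, c*f+d*h).
Definition adj4 (R : comNzRingType) (q : quad R) : quad R :=
  let: (a,b,c,d) := q in (d,-b,-c,a).
Definition opp4 (R : comNzRingType) (q : quad R) : quad R :=
  let: (a,b,c,d) := q in (-a,-b,-c,-d).
Definition det4 (R : comNzRingType) (q : quad R) : R :=
  let: (a,b,c,d) := q in a*d-b*c.
Definition m4 (R : comNzRingType) (q : quad R) : 'M[R]_2 :=
  let: (a,b,c,d) := q in mx2 a b c d.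
Definition q4 (R : comNzRingType) (M : 'M[R]_2) : quad R :=
  (M 0 0, M 0 1, M 1 0, M 1 1).

Lemma m4K (R : comNzRingType) (M : 'M[R]_2) : m4 (q4 M) = M.
Proof. by rewrite /= -mx2_eta. Qed.
Lemma m4M (R : comNzRingType) (q r : quad R) : m4 (mul4 q r) = m4 q *m m4 r.
Proof. by case: q => [[[a b] c] d]; case: r => [[[e f] g] h]; rewrite /= mul_mx2. Qed.
Lemma m4A (R : comNzRingType) (q : quad R) : m4 (adj4 q) = \adj (m4 q).
Proof. by case: q => [[[a b] c] d]; rewrite /= adj_mx2. Qed.
Lemma m4N (R : comNzRingType) (q : quad R) : m4 (opp4 q) = - m4 q.
Proof. by case: q => [[[a b] c] d]; rewrite /= opp_mx2. Qed.
Lemma m4D (R : comNzRingType) (q : quad R) : \det (m4 q) = det4 q.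
Proof. by case: q => [[[a b] c] d]; rewrite /= det_mx2. Qed.

Definition s3 : seq 'F_3 := [:: 0; 1; 2%:R].
Definition quads3 : seq (quad 'F_3) :=
  flatten (map (fun a => flatten (map (fun b => flatten (map (fun c =>
    map (fun d => (a,b,c,d)) s3) s3)) s3)) s3).
Definition D3q : seq (quad 'F_3) :=
  [:: (1,0,0,1); (-1,0,0,-1); (0,-1,1,0); (0,1,-1,0);
      (-1,1,1,1); (1,-1,-1,-1); (1,1,1,-1); (-1,-1,-1,1)].

Lemma check_comm : all (fun q => all (fun r =>
   (det4 q != 1) || (det4 r != 1) ||
   (mul4 (mul4 (mul4 (adj4 q) (adj4 r)) q) r \in D3q)) quads3) quads3.
Proof. vm_compute. reflexivity. Qed.
Lemma check_mul : all (fun q => all (fun r => mul4 q r \in D3q) D3q) D3q.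
Proof. vm_compute. reflexivity. Qed.
Lemma check_opp : all (fun q => opp4 q \in D3q) D3q.
Proof. vm_compute. reflexivity. Qed.

Lemma s3_all (x : 'F_3) : x \in s3.
Proof. by case: x => -[|[|[|n]]] Hn. Qed.

Lemma check_quads : all (fun a => all (fun b => all (fun c => all (fun d =>
  (a,b,c,d) \in quads3) s3) s3) s3) s3.
Proof. vm_compute. reflexivity. Qed.

Lemma quads3_all (q : quad 'F_3) : q \in quads3.
Proof.
case: q => [[[a b] c] d].
exact: (allP (allP (allP (allP check_quads _ (s3_all a)) _ (s3_all b)) _ (s3_all c)) _ (s3_all d)).
Qed.

Lemma D3_m4 (q : quad 'F_3) : (m4 q \in D3) = (q \in D3q).
Proof.
case: q => [[[a b] c] d]; rewrite /D3 /D3q /= !inE !eq_mx2 !xpair_eqE !andbA //.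
Qed.

Lemma D3_ex (N : 'M['F_3]_2) : N \in D3 -> exists2 q, q \in D3q & N = m4 q.
Proof. by move=> h; exists (q4 N); rewrite ?m4K // -D3_m4 m4K. Qed.

Lemma comm_D3 C : comm_Gamma2 C -> redmx 3 C \in D3.
Proof.
elim=> [|A B C' hA hB _ IH]; first by rewrite red1 one_mx2 inE eqxx.
rewrite redM commxE ?(proj1 hA) ?(proj1 hB) // !redM !redA.
have [r hr ->] := D3_ex IH.
rewrite -[redmx 3 A]m4K -[redmx 3 B]m4K -!m4A -!m4M D3_m4.
have dA : det4 (q4 (redmx 3 A)) = 1 by rewrite -m4D m4K redD (proj1 hA).
have dB : det4 (q4 (redmx 3 B)) = 1 by rewrite -m4D m4K redD (proj1 hB).
have := allP check_comm _ (quads3_all (q4 (redmx 3 A))).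
move=> /allP /(_ _ (quads3_all (q4 (redmx 3 B)))); rewrite dA dB /= => h.
exact: (allP (allP check_mul _ h)).
Qed.

Lemma part1a (N : 'M['F_3]_2) : image_Gbar2_2 N -> N \in D3.
Proof.
case=> M [[h|h] <-]; first exact: comm_D3.
have := comm_D3 h; rewrite redN => /D3_ex [q hq E].
rewrite -[redmx 3 M]opprK E -m4N D3_m4; exact: (allP check_opp).
Qed.

Definition Uz (n : int) : 'M[int]_2 := mx2 1 n 0 1.
Definition Lz (n : int) : 'M[int]_2 := mx2 1 0 n 1.
Lemma G_U2 : Gamma2 (Uz 2). Proof. by apply: Gamma2_mx2. Qed.
Lemma G_Um2 : Gamma2 (Uz (-2)). Proof. by apply: Gamma2_mx2. Qed.
Lemma G_L2 : Gamma2 (Lz 2). Proof. by apply: Gamma2_mx2. Qed.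
Lemma G_Lm2 : Gamma2 (Lz (-2)). Proof. by apply: Gamma2_mx2. Qed.

Ltac comm3 X Y :=
  apply: (S_eq (Scomm 3 X Y)); rewrite /redmx /Uz /Lz !map_mx2 !adj_mx2 !mul_mx2;
  apply/eqP; rewrite eq_mx2; vm_compute; reflexivity.

Lemma part1b (N : 'M['F_3]_2) : N \in D3 -> image_Gbar2_2 N.
Proof.
rewrite /D3 !inE.
case/orP; first by move/eqP->; rewrite -one_mx2; exact: S1.
case/orP; first by move/eqP->; rewrite (_ : mx2 (-1) 0 0 (-1) = - mx2 1 0 0 1 :> 'M['F_3]_2);
    [rewrite -one_mx2; apply: SN; exact: S1 | rewrite opp_mx2 oppr0].
case/orP; first by move/eqP->; comm3 G_U2 G_L2.
case/orP; first by move/eqP->; comm3 G_L2 G_U2.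
case/orP; first by move/eqP->; comm3 G_L2 G_Um2.
case/orP; first by move/eqP->; comm3 G_Um2 G_L2.
case/orP; first by move/eqP->; comm3 G_U2 G_Lm2.
by move/eqP->; comm3 G_Lm2 G_U2.
Qed.

Section Part2.
Variable p : nat.
Hypothesis pp : prime p.
Hypothesis p3 : (3 < p)%N.

Lemma natFp_nz n : (0 < n)%N -> (n <= 3)%N -> (n%:R : 'F_p) != 0.
Proof.
move=> n0 n3; rewrite -(dvdn_pcharf (pchar_Fp pp)); apply/negP => /dvdn_leq.
by move=> /(_ n0) h; move: (leq_trans h n3); rewrite leqNgt p3.
Qed.

Lemma two_nz : (2 : 'F_p) != 0. Proof. exact: natFp_nz. Qed.
Lemma three_nz : (3 : 'F_p) != 0. Proof. exact: natFp_nz. Qed.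

Lemma SU (t : 'F_p) : image_Gbar2_2 (mx2 1 t 0 1).
Proof.
pose kk : 'F_p := - 3^-1.
pose jj : 'F_p := 9 * t / 16.
pose k : int := (nat_of_ord kk)%:Z.
pose j : int := (nat_of_ord jj)%:Z.
have hX : Gamma2 (mx2 (-3) 2 (-6 * k - 2) (4 * k + 1)).
  apply: Gamma2_mx2.
  - ring.
  - by [].
  - by [].
  - by apply/dvdzP; exists (-3 * k - 1); ring.
  - by apply/dvdzP; exists (2 * k); ring.
have hY : Gamma2 (Uz (2 * j)).
  apply: Gamma2_mx2.
  - ring.
  - by [].
  - by apply/dvdzP; exists j; ring.
  - by [].
  - by [].
apply: (S_eq (Scomm p hX hY)); rewrite /redmx /Uz !map_mx2 !adj_mx2 !mul_mx2.
rewrite /k /j.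
rewrite !(intrD, intrM, intrN) -!pmulrn ?mulr1n ?mulr0n !natr_Zp /kk /jj.
have h2 := two_nz; have h3 := three_nz.
have h16 : (16 : 'F_p) != 0.
  rewrite (_ : (16 : 'F_p) = 2 ^+ 4); first exact: expf_neq0.
  ring.
by congr mx2; field; rewrite h3 h16.
Qed.
Lemma SL (t : 'F_p) : image_Gbar2_2 (mx2 1 0 t 1).
Proof.
pose kk : 'F_p := - 3^-1.
pose jj : 'F_p := 9 * t / 16.
pose k : int := (nat_of_ord kk)%:Z.
pose j : int := (nat_of_ord jj)%:Z.
have hX : Gamma2 (mx2 (4 * k + 1) (-6 * k - 2) 2 (-3)).
  apply: Gamma2_mx2.
  - ring.
  - by apply/dvdzP; exists (2 * k); ring.
  - by apply/dvdzP; exists (-3 * k - 1); ring.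
  - by [].
  - by [].
have hY : Gamma2 (Lz (2 * j)).
  apply: Gamma2_mx2.
  - ring.
  - by [].
  - by [].
  - by apply/dvdzP; exists j; ring.
  - by [].
apply: (S_eq (Scomm p hX hY)); rewrite /redmx /Lz !map_mx2 !adj_mx2 !mul_mx2.
rewrite /k /j.
rewrite !(intrD, intrM, intrN) -!pmulrn ?mulr1n ?mulr0n !natr_Zp /kk /jj.
have h2 := two_nz; have h3 := three_nz.
have h16 : (16 : 'F_p) != 0.
  rewrite (_ : (16 : 'F_p) = 2 ^+ 4); first exact: expf_neq0.
  ring.
by congr mx2; field; rewrite h3 h16.
Qed.

Lemma S_case1 (a b c d : 'F_p) : a * d - b * c = 1 -> c != 0 ->
  image_Gbar2_2 (mx2 a b c d).
Proof.
move=> H cnz.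
have hb : b = (a * d - 1) / c by rewrite -H; field.
have -> : mx2 a b c d =
    mx2 1 ((a - 1) / c) 0 1 *m mx2 1 0 c 1 *m mx2 1 ((d - 1) / c) 0 1.
  by rewrite !mul_mx2 {1}hb; congr mx2; field.
by apply: SM; [apply: SM|]; [apply: SU|apply: SL|apply: SU].
Qed.

Lemma S_all (N : 'M['F_p]_2) : \det N = 1 -> image_Gbar2_2 N.
Proof.
rewrite [N]mx2_eta det_mx2.
move: (N 0 0) (N 0 1) (N 1 0) (N 1 1) => a b c d H.
have [c0|cnz] := eqVneq c 0; last exact: S_case1.
have dnz : d != 0.
  by apply/eqP => d0; move: H; rewrite c0 d0 !mulr0 subr0 => /eqP; rewrite eq_sym oner_eq0.
have -> : mx2 a b c d = mx2 (a + b) b (c + d) d *m mx2 1 0 (-1) 1.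
  by rewrite mul_mx2; congr mx2; ring.
apply: SM; last exact: SL.
apply: S_case1; first by rewrite -H; ring.
by rewrite c0 add0r.
Qed.
End Part2.

Lemma image_det p (N : 'M['F_p]_2) : image_Gbar2_2 N -> \det N = 1.
Proof.
case=> M [h <-]; rewrite redD.
have -> : \det M = 1.
  case: h => h; first exact: comm_det.
  move: (comm_det h); rewrite [M]mx2_eta opp_mx2 !det_mx2 => <-; ring.
by rewrite rmorph1.
Qed.

Theorem proposition12 :
  (forall N : 'M['F_3]_2, image_Gbar2_2 N <-> N \in D3) /\
  (forall p : nat, prime p -> (3 < p)%N ->
     forall N : 'M['F_p]_2, \det N = 1 <-> image_Gbar2_2 N).
Proof.
split=> [N|p pp p3 N]; split.
- exact: part1a.
- exact: part1b.
- exact: S_all.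
- exact: image_det.
Qed.
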